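(* Let $P_d$ be the left path on $d$ vertices (each vertex except the last is the parent of the next via a left-child edge), with all edges contiguous, and let $x,x'$ be two distinct vertices of $P_d$. Let $(P,e)$ be any tree pattern, and let $Q$ and $Q'$ be the tree patterns obtained from $(P_d,1\cdots1)$ by attaching $(P,e)$ as the right subtree of $x$, respectively of $x'$, via a non-contiguous edge. Then $Q$ and $Q'$ are Wilf-equivalent.
   Context: $\mathcal{T}_n$ is the set of binary trees on $n$ vertices labeled $1,\dots,n$ by the search tree property (labels of a combined tree are reassigned by this property). $c_L,c_R,p$: left child, right child, parent. A tree pattern is $(P,e)$, $P\in\mathcal{T}_k$, $e\colon[k]\setminus\{\text{root}\}\to\{0,1\}$; the edge $(i,p(i))$ is contiguous if $e(i)=1$, non-contiguous if $e(i)=0$. $T\in\mathcal{T}_n$ contains $(P,e)$ if there is an injection $f\colon[k]\to[n]$ such that for every non-root $i$ of $P$: if $e(i)=1$, $f(i)$ is the left (resp. right) child of $f(p(i))$ when $i$ is the left (resp. right) child of $p(i)$; if $e(i)=0$, $f(i)$ lies in the left (resp. right) subtree of $f(p(i))$. $\mathcal{T}_n(Q)$ is the set of avoiders of $Q$. $Q,Q'$ are Wilf-equivalent if $|\mathcal{T}_n(Q)|=|\mathcal{T}_n(Q')|$ for all $n\ge0$. *)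

(* Defs.v *)
From mathcomp Require Import all_boot.
From Stdlib Require Import ClassicalEpsilon.
Set Implicit Arguments. Unset Strict Implicit. Unset Printing Implicit Defensive.

(* Unlabelled binary tree shapes; labels 1..n are determined by the search
   tree property (in-order), so a tree in T_n is just a shape with n nodes. *)
Inductive btree := Leaf | Node of btree & btree.

Fixpoint bsize (t : btree) : nat :=
  if t is Node l r then (bsize l + bsize r).+1 else 0.

(* Vertices of a tree are named by their address from the root:
   false = go to left child, true = go to right child.
   The parent of [rcons a b] is [a]; it is the left child if b = false. *)
Fixpoint nodes (t : btree) : seq (seq bool) :=
  if t is Node l r then
    [::] :: map (cons false) (nodes l) ++ map (cons true) (nodes r)
  else [::].

Fixpoint trees_upto (h : nat) : seq btree :=
  if h is h'.+1 then
    Leaf :: [seq Node lr.1 lr.2 | lr <- [seq (l, r) | l <- trees_upto h', r <- trees_upto h']]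
  else [:: Leaf].

Definition trees (n : nat) : seq btree :=
  [seq t <- trees_upto n | bsize t == n].

(* A tree pattern (P, e): e gives, for every non-root vertex a of P,
   whether the edge (a, parent a) is contiguous (true) or not (false).
   Values of e at the root / non-vertices are irrelevant. *)
Record pattern := Pattern { pat_tree : btree; pat_e : seq bool -> bool }.

(* T contains (P,e): an injection f from vertices of P to vertices of T
   respecting contiguous edges (child on the same side) and non-contiguous
   edges (descendant in the subtree on the same side). *)
Definition contains (T : btree) (Q : pattern) : Prop :=
  exists f : seq bool -> seq bool,
    {in nodes (pat_tree Q) &, injective f} /\
    {in nodes (pat_tree Q), forall a, f a \in nodes T} /\
    (forall (a : seq bool) (b : bool), rcons a b \in nodes (pat_tree Q) ->
       if pat_e Q (rcons a b) then f (rcons a b) = rcons (f a) b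
       else exists s, f (rcons a b) = rcons (f a) b ++ s).

Definition containsb (T : btree) (Q : pattern) : bool :=
  if excluded_middle_informative (contains T Q) then true else false.

Definition num_avoiders (Q : pattern) (n : nat) : nat :=
  count (fun T => ~~ containsb T Q) (trees n).

Definition wilf_equiv (Q Q' : pattern) : Prop :=
  forall n, num_avoiders Q n = num_avoiders Q' n.

Fixpoint left_path (d : nat) : btree :=
  if d is d'.+1 then Node (left_path d') Leaf else Leaf.

(* Left path on d vertices with P attached as right subtree of its i-th vertex
   (vertex at address nseq i false, i counted from 0 at the root). *)
Fixpoint left_path_attach (d i : nat) (P : btree) : btree :=
  match d, i with
  | 0, _ => Leaf
  | d'.+1, 0 => Node (left_path d') P
  | d'.+1, i'.+1 => Node (left_path_attach d' i' P) Leaf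
  end.

(* Edge labelling: path edges contiguous; the edge from the root of P to the
   path vertex is non-contiguous; edges inside P keep their label e. *)
Definition attach_e (i : nat) (e : seq bool -> bool) (a : seq bool) : bool :=
  let pre := rcons (nseq i false) true in
  if (size pre <= size a) && (take (size pre) a == pre) then
    let a' := drop (size pre) a in
    if a' == [::] then false else e a'
  else true.

Definition attach_pattern (d i : nat) (Pe : pattern) : pattern :=
  Pattern (left_path_attach d i (pat_tree Pe)) (attach_e i (pat_e Pe)).

(* Main.v *)
Require Import Defs.
From Stdlib Require Import ClassicalEpsilon.
From HB Require Import structures.
From mathcomp Require Import all_boot zify.
Set Implicit Arguments. Unset Strict Implicit. Unset Printing Implicit Defensive.


Fixpoint eqbt (a b : btree) : bool :=
  match a, b with
  | Leaf, Leaf => true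
  | Node l r, Node l' r' => eqbt l l' && eqbt r r'
  | _, _ => false end.

Lemma eqbtP : Equality.axiom eqbt.
Proof.
elim=> [|l IHl r IHr] [|l' r'] /=; try by constructor.
apply: (iffP andP) => [[/IHl -> /IHr ->]//|[<- <-]].
by split; [apply/IHl|apply/IHr].
Qed.
HB.instance Definition _ := hasDecEq.Build btree eqbtP.

Fixpoint height (t : btree) : nat :=
  if t is Node l r then (maxn (height l) (height r)).+1 else 0.

Lemma height_size t : height t <= bsize t.
Proof.
elim: t => [|l IHl r IHr] //=; rewrite ltnS geq_max.
by rewrite (leq_trans IHl) ?leq_addr // (leq_trans IHr) ?leq_addl.
Qed.

Lemma mem_trees_upto h t : (t \in trees_upto h) = (height t <= h).
Proof.
elim: h t => [|h IH] [|l r] //=.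
rewrite in_cons /= ltnS geq_max -!IH.
apply/mapP/andP => [[[l' r'] /allpairsP [[x y] [/= xi yi [-> ->]]] [-> ->]]//|[lu ru]].
by exists (l, r) => //; apply/allpairsP; exists (l, r).
Qed.

Lemma uniq_trees_upto h : uniq (trees_upto h).
Proof.
elim: h => [|h IH] //=; apply/andP; split.
  by apply/mapP => -[[l r]] _.
rewrite map_inj_uniq; first by apply: allpairs_uniq => // -[? ?] [? ?].
by move=> [l r] [l' r'] [-> ->].
Qed.

Lemma mem_trees n t : (t \in trees n) = (bsize t == n).
Proof.
rewrite mem_filter mem_trees_upto andbC; case: (bsize t =P n) => [<-|]; rewrite ?andbF //.
by rewrite height_size.
Qed.

Lemma uniq_trees n : uniq (trees n).
Proof. by rewrite filter_uniq // uniq_trees_upto. Qed.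

Lemma count_inv (f : btree -> btree) (p : pred btree) n :
  involutive f -> (forall t, bsize (f t) = bsize t) ->
  count p (trees n) = count (p \o f) (trees n).
Proof.
move=> fK fs; rewrite -(count_map f).
have H : perm_eq (trees n) (map f (trees n)).
  apply: uniq_perm.
  - exact: uniq_trees.
  - by rewrite map_inj_uniq ?uniq_trees //; apply: inv_inj.
  move=> t; rewrite -{2}(fK t) mem_map ?mem_trees ?fs //; exact: inv_inj.
move/permP: H => H; exact: H.
Qed.

Lemma count_sum (T : eqType) (p : pred T) s : count p s = \sum_(x <- s) p x.
Proof. by elim: s => [|x s IH]; rewrite ?big_nil ?big_cons //= IH. Qed.

Lemma sum_upto N k (F : btree -> nat) : k <= N ->
  \sum_(t <- trees_upto N | bsize t == k) F t = \sum_(t <- trees k) F t.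
Proof.
move=> kN; rewrite -big_filter; apply: perm_big; apply: uniq_perm.
- by rewrite filter_uniq // uniq_trees_upto.
- exact: uniq_trees.
move=> t; rewrite mem_trees mem_filter mem_trees_upto andbC.
by case: (bsize t =P k) => [e|]; rewrite ?andbF ?andbT // (leq_trans (height_size t)) // e.
Qed.

Lemma sum_pick n (a : nat) (S : nat -> nat) :
  \sum_(k < n.+1) (if a == k then S k else 0) = if a < n.+1 then S a else 0.
Proof.
rewrite -big_mkcond /=; case: ltnP => an.
  by rewrite (big_pred1 (Ordinal an)) // => k; rewrite /= eq_sym.
by rewrite big_pred0 // => k; apply/eqP => ak; move: (ltn_ord k); rewrite -ak ltnNge an.
Qed.

Lemma count_node (q : btree -> btree -> bool) n :
  count (fun t => if t is Node l r then q l r else false) (trees n.+1) =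
  \sum_(k < n.+1) \sum_(l <- trees k) \sum_(r <- trees (n - k)) q l r.
Proof.
rewrite count_sum big_filter big_mkcond /= big_cons /= big_map big_allpairs /=.
rewrite add0n; apply/esym.
under eq_bigr => k _ do rewrite -(@sum_upto n k (fun l => \sum_(r <- trees (n-k)) q l r)) ?leq_ord //.
under eq_bigr => k _ do under eq_bigr => l _ do rewrite -(@sum_upto n (n-k) (q l)) ?leq_subr //.
under eq_bigr => k _ do rewrite big_mkcond.
rewrite exchange_big /=; apply: eq_bigr => l _.
rewrite (@sum_pick n (bsize l) (fun k => \sum_(t <- trees_upto n | bsize t == n - k) q l t)).
case: ltnP => ln.
  rewrite big_mkcond; apply: eq_bigr => r _; rewrite eqSS.
  by rewrite -(eqn_add2l (bsize l)) subnKC // -ltnS.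
by rewrite big1 // => r _; rewrite eqSS; case: eqP => // e; lia.
Qed.


Fixpoint Pred (ps : seq (btree -> bool)) (t : btree) : bool :=
  match ps, t with
  | [::], Leaf => true
  | p :: ps', Node l r => p r && Pred ps' l
  | _, _ => false end.

Definition cnt (p : pred btree) n := count p (trees n).

Lemma cnt_Pred_cons p ps n :
  cnt (Pred (p :: ps)) n.+1 = \sum_(k < n.+1) cnt (Pred ps) k * cnt p (n - k).
Proof.
rewrite /cnt.
have -> : count (Pred (p :: ps)) (trees n.+1) =
  count (fun t => if t is Node l r then p r && Pred ps l else false) (trees n.+1).
  by apply: eq_count => -[|l r].
rewrite count_node; apply: eq_bigr => k _; rewrite !count_sum big_distrl /=; apply: eq_bigr => l _.
rewrite big_distrr /=; apply: eq_bigr => r _.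
by rewrite mulnb andbC.
Qed.
Lemma cnt_Pred_cons0 p ps : cnt (Pred (p :: ps)) 0 = 0.
Proof. by []. Qed.

Lemma cnt_replace n ps ps' :
  size ps = size ps' ->
  (forall k m, m < n -> cnt (nth xpredT ps k) m = cnt (nth xpredT ps' k) m) ->
  cnt (Pred ps) n = cnt (Pred ps') n.
Proof.
elim: ps ps' n => [|p ps IH] [|p' ps'] n //= [sz] H.
case: n H => [|n] H; first by rewrite !cnt_Pred_cons0.
rewrite !cnt_Pred_cons; apply: eq_bigr => k _.
rewrite (H 0 (n - k)) /=; last by lia.
congr (_ * _); apply: IH => // k' m mk; apply: (H k'.+1); have := ltn_ord k; lia.
Qed.

Fixpoint swk (k : nat) (t : btree) : btree :=
  match k, t with
  | 0, Node (Node l x) y => Node (Node l y) x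
  | k'.+1, Node l r => Node (swk k' l) r
  | _, t => t end.

Lemma swkK k : involutive (swk k).
Proof.
elim: k => [|k IH] [|l r] //=; first by case: l.
by rewrite IH.
Qed.

Lemma swk_size k t : bsize (swk k t) = bsize t.
Proof.
elim: k t => [|k IH] [|l r] //=; first by case: l => //= l x; lia.
by rewrite IH.
Qed.

Lemma Pred_swk ps a b qs t :
  Pred (ps ++ a :: b :: qs) (swk (size ps) t) = Pred (ps ++ b :: a :: qs) t.
Proof.
elim: ps t => [|p ps IH] [|l r] //=; first by case: l => [|l x] /=; rewrite ?andbF // andbCA.
by rewrite IH.
Qed.

Lemma cnt_swap ps a b qs n :
  cnt (Pred (ps ++ a :: b :: qs)) n = cnt (Pred (ps ++ b :: a :: qs)) n.
Proof.
rewrite /cnt (count_inv _ _ (swkK (size ps)) (swk_size (size ps))).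
by apply: eq_count => t /=; rewrite Pred_swk.
Qed.

Lemma cnt_move ps x y c qs n :
  cnt (Pred (ps ++ x :: nseq c y ++ qs)) n = cnt (Pred (ps ++ nseq c y ++ x :: qs)) n.
Proof.
elim: c ps => [|c IH] ps //=.
have E s : ps ++ y :: s = (ps ++ [:: y]) ++ s by rewrite -catA.
by rewrite cnt_swap (E (x :: nseq c y ++ qs)) (E (nseq c y ++ x :: qs)) IH.
Qed.

Lemma cnt_block ps x a y c qs n :
  cnt (Pred (ps ++ nseq a x ++ nseq c y ++ qs)) n =
  cnt (Pred (ps ++ nseq c y ++ nseq a x ++ qs)) n.
Proof.
elim: a ps => [|a IH] ps //=.
have E s : ps ++ x :: s = (ps ++ [:: x]) ++ s by rewrite -catA.
by rewrite (E (nseq a x ++ nseq c y ++ qs)) IH -catA /= cnt_move.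
Qed.


Lemma Pred_ext ps ps' :
  size ps = size ps' -> (forall k, k < size ps -> nth xpredT ps k =1 nth xpredT ps' k) ->
  Pred ps =1 Pred ps'.
Proof.
elim: ps ps' => [|p ps IH] [|p' ps'] //= [sz] H [|l r] //=.
have /= -> := H 0 isT r; rewrite (IH ps') // => k kl; exact: (H k.+1).
Qed.

Definition mk (A B : pred btree) (d i L : nat) : seq (pred btree) :=
  mkseq (fun k => if (i <= k) && (k + d <= L + i) then B else A) L.

Lemma mk_small A B d i L : L < d -> Pred (mk A B d i L) =1 Pred (nseq L A).
Proof.
move=> Ld; apply: Pred_ext => [|k]; rewrite ?size_mkseq ?size_nseq // => kL.
rewrite nth_mkseq // nth_nseq kL; case: ifP => // /andP [] *; lia.
Qed.

Lemma mk_big A B d i L : d <= L -> i < d ->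
  Pred (mk A B d i L) =1 Pred (nseq i A ++ nseq (L + 1 - d) B ++ nseq (d - 1 - i) A).
Proof.
move=> dL id; apply: Pred_ext => [|k]; rewrite ?size_mkseq ?size_cat ?size_nseq; first lia.
move=> kL; rewrite nth_mkseq // !nth_cat !size_nseq !nth_nseq.
by repeat case: ifP => ?; try lia.
Qed.

Lemma cnt_mk A B d i j L n : i < d -> j < d ->
  cnt (Pred (mk A B d i L)) n = cnt (Pred (mk A B d j L)) n.
Proof.
move=> id jd; case: (ltnP L d) => Ld.
  by rewrite /cnt (eq_count (mk_small _ _ _ Ld)) (eq_count (mk_small _ _ _ Ld)).
have E k : k < d -> cnt (Pred (mk A B d k L)) n = cnt (Pred (nseq (L + 1 - d) B ++ nseq (d - 1) A)) n.
  move=> kd; rewrite /cnt (eq_count (mk_big _ _ Ld kd)).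
  have := @cnt_block [::] A k B (L + 1 - d) (nseq (d - 1 - k) A) n; rewrite /cnt /= => ->.
  by rewrite -nseqD; congr (count (Pred (_ ++ nseq _ _)) _); lia.
by rewrite !E.
Qed.


Fixpoint subt (t : btree) (a : seq bool) {struct a} : btree :=
  match a with
  | [::] => t
  | b :: a' => if t is Node l r then subt (if b then r else l) a' else Leaf
  end.

Fixpoint slen (t : btree) : nat := if t is Node l _ then (slen l).+1 else 0.

Fixpoint rs (t : btree) (k : nat) : btree :=
  match t, k with
  | Node l r, 0 => r
  | Node l r, k'.+1 => rs l k'
  | Leaf, _ => Leaf end.

Lemma catI (T : Type) (s : seq T) : injective (cat s).
Proof. by elim: s => [|x s IH] //= a b [/IH]. Qed.

Lemma nseq_rcons (T : Type) m (x : T) : rcons (nseq m x) x = nseq m.+1 x.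
Proof. by elim: m => //= m ->. Qed.

Lemma nodes_cons b a l r :
  (b :: a \in nodes (Node l r)) = (a \in nodes (if b then r else l)).
Proof.
rewrite /= in_cons /= mem_cat.
case: b.
  rewrite mem_map; last by move=> x y [].
  by case: mapP => // -[x _ []].
rewrite mem_map; last by move=> x y [].
by case: (mapP (f := cons true)) => [[x _ []]|]; rewrite ?orbF.
Qed.

Lemma nodes_Leaf a : (a \in nodes Leaf) = false.
Proof. by []. Qed.

Lemma nodes_subt t a b : (a ++ b \in nodes t) = (b \in nodes (subt t a)).
Proof.
elim: a t => [|x a IH] [|l r] //.
by rewrite cat_cons nodes_cons IH.
Qed.

Lemma subt_cat t a b : subt t (a ++ b) = subt (subt t a) b.
Proof. by elim: a t => [|x a IH] [|l r] //=; case: b {IH}. Qed.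

Lemma rs_subt t k : rs t k = subt t (rcons (nseq k false) true).
Proof. by elim: k t => [|k IH] [|l r] //=. Qed.

Lemma nseq_nodes t m : (nseq m false \in nodes t) = (m < slen t).
Proof.
elim: m t => [|m IH] [|l r] //=.
by rewrite -/(nodes (Node l r)) nodes_cons IH.
Qed.

Lemma rcons_nodes t a b : rcons a b \in nodes t -> a \in nodes t.
Proof.
rewrite -cats1 nodes_subt => H; rewrite -[a]cats0 nodes_subt; move: H.
by case: (subt t a).
Qed.

Lemma nodes_split t x : x \in nodes t ->
  (exists m, m < slen t /\ x = nseq m false) \/
  (exists k p, p \in nodes (rs t k) /\ x = rcons (nseq k false) true ++ p).
Proof.
elim: x t => [|b x IH] [|l r] //=.
  by move=> _; left; exists 0.
rewrite -/(nodes (Node l r)) nodes_cons; case: b => xn.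
  by right; exists 0, x.
case: (IH _ xn) => [[m [ml ->]]|[k [p [pn ->]]]].
  by left; exists m.+1.
by right; exists k.+1, p.
Qed.

Fixpoint lp (d : nat) : btree := if d is d'.+1 then Node (lp d') Leaf else Leaf.
Lemma left_path_lp d : left_path d = lp d. Proof. by []. Qed.

Lemma slen_lpa d i P : i < d -> slen (left_path_attach d i P) = d.
Proof.
elim: d i => [|d IH] [|i] //=.
  by move=> _; elim: d {IH} => //= d ->.
by move=> id; rewrite IH.
Qed.

Lemma rs_lp d k : rs (left_path d) k = Leaf.
Proof. by elim: d k => [|d IH] [|k] //=. Qed.

Lemma rs_lpa d i P k : i < d -> rs (left_path_attach d i P) k = if k == i then P else Leaf.
Proof.
elim: d i k => [|d IH] [|i] [|k] //= id.
- by rewrite rs_lp.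
- by rewrite IH.
Qed.

Lemma pre_true i : true \in rcons (nseq i false) true.
Proof. by rewrite mem_rcons mem_head. Qed.

Lemma nomatch i m :
  (size (rcons (nseq i false) true) <= size (nseq m false)) &&
  (take (size (rcons (nseq i false) true)) (nseq m false) == rcons (nseq i false) true) = false.
Proof.
apply/negbTE/negP => /andP [_ /eqP E].
by have := pre_true i; rewrite -E => /mem_take; rewrite mem_nseq andbF.
Qed.

Lemma match_pre i p :
  (size (rcons (nseq i false) true) <= size (rcons (nseq i false) true ++ p)) &&
  (take (size (rcons (nseq i false) true)) (rcons (nseq i false) true ++ p) == rcons (nseq i false) true).
Proof. by rewrite size_cat leq_addr take_size_cat //= eqxx. Qed.

Lemma AE1 i e m : attach_e i e (nseq m false) = true.
Proof. by rewrite /attach_e nomatch. Qed.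

Lemma AE2 i e p : attach_e i e (rcons (nseq i false) true ++ p) = (p != [::]) && e p.
Proof.
rewrite /attach_e match_pre drop_size_cat //.
by case: p.
Qed.

Definition Xp (d i : nat) (Pe : pattern) (t : btree) :=
  d <= slen t /\ contains (rs t i) Pe.

Lemma contains_lift T a Q : contains (subt T a) Q -> contains T Q.
Proof.
move=> [f [finj [fmem fedge]]]; exists (fun x => a ++ f x); split; [|split].
- by move=> x y xn yn /catI; apply: finj.
- by move=> x xn; rewrite nodes_subt fmem.
move=> x b xn; have := fedge x b xn.
case: (pat_e Q (rcons x b)) => [->|[s ->]]; first by rewrite rcons_cat.
by exists s; rewrite rcons_cat catA.
Qed.


Lemma nodesQ_path d i P m : i < d -> m < d -> nseq m false \in nodes (left_path_attach d i P).
Proof. by move=> id md; rewrite nseq_nodes slen_lpa. Qed.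

Lemma nodesQ_P d i P p : i < d -> p \in nodes P ->
  rcons (nseq i false) true ++ p \in nodes (left_path_attach d i P).
Proof. by move=> id pn; rewrite nodes_subt -rs_subt rs_lpa // eqxx. Qed.

Lemma nodesQ_split d i P x : i < d -> x \in nodes (left_path_attach d i P) ->
  (exists m, m < d /\ x = nseq m false) \/
  (exists p, p \in nodes P /\ x = rcons (nseq i false) true ++ p).
Proof.
move=> id /nodes_split [[m [ml ->]]|[k [p [pn ->]]]].
  by left; exists m; rewrite -(slen_lpa P id).
move: pn; rewrite rs_lpa //; case: eqP => // -> pn.
by right; exists p.
Qed.

Lemma char_fwd d i P e T : i < d ->
  contains T (attach_pattern d i (Pattern P e)) -> exists u, Xp d i (Pattern P e) (subt T u).
Proof.
move=> id [f [finj [fmem fedge]]]; rewrite /= in finj fmem fedge.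
set pre := rcons (nseq i false) true in fedge *.
exists (f [::]); set u := f [::].
have S1 m : m < d -> f (nseq m false) = u ++ nseq m false.
  elim: m => [|m IH] md; first by rewrite cats0.
  have := fedge (nseq m false) false; rewrite nseq_rcons AE1 => ->; last exact: nodesQ_path.
  by rewrite IH 1?ltnW // rcons_cat nseq_rcons.
have S2 p : p \in nodes P -> exists s, f (pre ++ p) = u ++ pre ++ s.
  elim/last_ind: p => [|p b IH] pn.
    have := fedge (nseq i false) true; rewrite -[rcons _ true]cats0 AE2 /= => H.
    case: H => [|s ->]; first exact: nodesQ_P.
    by exists s; rewrite S1 // rcons_cat catA.
  case: (IH (rcons_nodes pn)) => s Hs.
  have := fedge (pre ++ p) b; rewrite rcons_cat AE2.
  have -> : (rcons p b != [::]) = true by case: (p) {IH Hs pn}.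
  move=> /(_ (nodesQ_P id pn)); case: (e (rcons p b)) => /= [->|[s' ->]].
    by exists (rcons s b); rewrite Hs !rcons_cat.
  exists (rcons s b ++ s'); rewrite Hs !rcons_cat -!catA; reflexivity.
pose g p := drop (size (u ++ pre)) (f (pre ++ p)).
have Hg p : p \in nodes P -> f (pre ++ p) = u ++ pre ++ g p.
  by move=> pn; case: (S2 p pn) => s Hs; rewrite /g Hs !catA drop_size_cat.
split.
  have := fmem (nseq d.-1 false) (nodesQ_path P id (_ : d.-1 < d)); rewrite S1; last by lia.
  by rewrite nodes_subt nseq_nodes => /(_ ltac:(lia)); lia.
rewrite rs_subt -subt_cat; exists g; split; [|split].
- move=> p q pn qn E; apply: (catI (s := pre)); apply: finj; try exact: nodesQ_P.
  by rewrite Hg // Hg // E.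
- by move=> p pn; rewrite -nodes_subt -catA -Hg // fmem // nodesQ_P.
move=> a b abn /=; have := fedge (pre ++ a) b; rewrite rcons_cat AE2.
have -> : (rcons a b != [::]) = true by case: (a) abn.
have an := rcons_nodes abn.
move=> /(_ (nodesQ_P id abn)); case: (e (rcons a b)) => /= [|[s]]; rewrite !Hg // !rcons_cat.
  by move/catI/catI.
by rewrite -!catA => /catI/catI ->; exists s.
Qed.

Lemma char_bwd d i P e T u : i < d ->
  Xp d i (Pattern P e) (subt T u) -> contains T (attach_pattern d i (Pattern P e)).
Proof.
move=> id [H1 [g [ginj [gmem gedge]]]]; rewrite /= in ginj gmem gedge.
rewrite rs_subt -subt_cat in gmem.
set pre := rcons (nseq i false) true in gmem *.
pose W := u ++ pre.
pose f x := if (size pre <= size x) && (take (size pre) x == pre)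
            then W ++ g (drop (size pre) x) else u ++ x.
have F1 m : f (nseq m false) = u ++ nseq m false by rewrite /f nomatch.
have F2 p : f (pre ++ p) = W ++ g p by rewrite /f match_pre drop_size_cat.
have NE m p : nseq m false <> pre ++ p.
  move=> E; have := pre_true i; rewrite -/pre => H.
  by have := mem_cat true pre p; rewrite H -E mem_nseq andbF.
exists f; split; [|split] => /=.
- move=> x y /(nodesQ_split id) [[m [md ->]]|[p [pn ->]]]
    /(nodesQ_split id) [[m' [md' ->]]|[p' [pn' ->]]]; rewrite ?F1 ?F2 /W -?catA.
  + by move/catI.
  + by move/catI/NE.
  + by move/esym/catI/NE.
  + by move/catI/catI/(ginj _ _ pn pn') ->.
- move=> x /(nodesQ_split id) [[m [md ->]]|[p [pn ->]]]; rewrite ?F1 ?F2.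
  + by rewrite nodes_subt nseq_nodes; lia.
  + by rewrite /W nodes_subt gmem.
move=> a b /(nodesQ_split id) [[m [md E]]|[p [pn E]]].
  case: m E md => [|m]; first by case: (a).
  rewrite -nseq_rcons => /rcons_inj [-> ->] md.
  by rewrite nseq_rcons AE1 !F1 rcons_cat nseq_rcons.
case/lastP: p pn E => [|p c] pn E.
  move: E; rewrite cats0 => /rcons_inj [-> ->].
  rewrite -/pre -[pre]cats0 AE2 /= F2 F1; exists (g [::]).
  by rewrite /W rcons_cat.
move: E; rewrite -rcons_cat => /rcons_inj [-> ->].
rewrite rcons_cat AE2.
have -> : (rcons p c != [::]) = true by case: (p).
have := gedge p c pn; case: (e (rcons p c)) => /= [E|[s E]]; rewrite !F2 /W E.
  by rewrite !rcons_cat.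
by exists s; rewrite rcons_cat -!catA.
Qed.


Lemma containsbP T Q : reflect (contains T Q) (containsb T Q).
Proof. by rewrite /containsb; case: excluded_middle_informative => h; constructor. Qed.

Lemma char d i Pe T : i < d ->
  containsb T (attach_pattern d i Pe) <-> exists u, Xp d i Pe (subt T u).
Proof.
case: Pe => P e Hid; split.
  by move/containsbP/char_fwd; apply.
by case=> u /(char_bwd Hid) /containsbP.
Qed.

Lemma subt_Leaf u : subt Leaf u = Leaf.
Proof. by case: u. Qed.

Lemma exsub_node (X : btree -> Prop) l r :
  (exists u, X (subt (Node l r) u)) <->
  X (Node l r) \/ (exists u, X (subt l u)) \/ (exists u, X (subt r u)).
Proof.
split.
  by case=> -[|[] u] /= h; [left | right; right; exists u | right; left; exists u].
case=> [h|[[u h]|[u h]]]; [by exists [::] | by exists (false :: u) | by exists (true :: u)].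
Qed.

Lemma cQ_Pe d i Pe T : i < d ->
  containsb T (attach_pattern d i Pe) -> containsb T Pe.
Proof.
move=> Hid /(char _ _ Hid) [u [_ h]]; apply/containsbP; apply: (contains_lift (a := u ++ rcons (nseq i false) true)).
by rewrite subt_cat -rs_subt.
Qed.

Definition Xb d i Pe t := (d <= slen t) && containsb (rs t i) Pe.

Lemma XbP d i Pe t : reflect (Xp d i Pe t) (Xb d i Pe t).
Proof.
rewrite /Xb; apply: (iffP andP) => [[h /containsbP]|[h /containsbP]] //.
Qed.

Lemma cQ_node d i Pe l r : i < d ->
  containsb (Node l r) (attach_pattern d i Pe) =
  [|| Xb d i Pe (Node l r), containsb l (attach_pattern d i Pe) |
      containsb r (attach_pattern d i Pe)].
Proof.
move=> Hid; apply/idP/idP.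
  move/(char _ _ Hid)/exsub_node => [/XbP -> //|[h|h]].
    by rewrite (proj2 (char _ _ Hid) h) orbT.
  by rewrite (proj2 (char _ _ Hid) h) !orbT.
case/or3P => [/XbP h|/(char _ _ Hid) h|/(char _ _ Hid) h]; apply/(char _ _ Hid)/exsub_node; auto.
Qed.

Lemma cQ_Leaf d i Pe : i < d -> containsb Leaf (attach_pattern d i Pe) = false.
Proof.
move=> Hid; apply/negbTE/negP => /(char _ _ Hid) [u]; rewrite subt_Leaf => -[/= h _]; lia.
Qed.

Lemma AvP d i Pe T : i < d ->
  ~~ containsb T (attach_pattern d i Pe) <->
  (forall k, k < slen T -> ~~ containsb (rs T k) (attach_pattern d i Pe)) /\
  (forall k, k + d <= slen T -> ~~ containsb (rs T (k + i)) Pe).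
Proof.
move=> Hid; elim: T => [|l IHl r _].
  by rewrite cQ_Leaf //; split=> // _; split=> // k /=; lia.
rewrite cQ_node // negb_or negb_or /Xb negb_and -ltnNge.
split.
  case/and3P => hX hl hr; case: (proj1 IHl hl) => h1 h2; split.
    by case=> [|k] //= kl; apply: h1.
  case=> [|k] /= kd.
    by move: hX; rewrite add0n ltnNge (leq_trans _ kd) ?leq_addl.
  by apply: h2; lia.
case=> h1 h2; apply/and3P; split.
- case: leqP => //= dl; exact: (h2 0).
- apply: (proj2 IHl); split; first by move=> k kl; apply: (h1 k.+1).
  by move=> k kd; apply: (h2 k.+1) => /=; lia.
- exact: (h1 0).
Qed.

Lemma PredP ps t :
  Pred ps t <-> size ps = slen t /\ (forall k, k < size ps -> nth xpredT ps k (rs t k)).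
Proof.
elim: ps t => [|p ps IH] [|l r] /=.
- by split.
- by split => // -[].
- by split => // -[].
split.
- case/andP => pr /IH [sz h]; split; first by rewrite sz.
  by case=> [|k] //= kl; apply: h.
case=> [[sz] h]; apply/andP; split; first exact: (h 0).
by apply/IH; split=> // k kl; apply: (h k.+1).
Qed.

Lemma Pred_mk d i Pe T : i < d ->
  Pred (mk (fun t => ~~ containsb t (attach_pattern d i Pe)) (fun t => ~~ containsb t Pe) d i (slen T)) T
  = ~~ containsb T (attach_pattern d i Pe).
Proof.
move=> Hid; apply/idP/idP.
  move/PredP; rewrite size_mkseq => -[_ h]; apply/(AvP _ _ Hid); split.
    move=> k kl; have := h k kl; rewrite nth_mkseq //; case: ifP => // _.
    by apply: contra; apply: cQ_Pe.
  move=> k kd; have := h (k + i) ltac:(lia); rewrite nth_mkseq; last by lia.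
  by case: ifP => // /negbT; rewrite negb_and -!ltnNge => /orP [] ?; lia.
move/(AvP _ _ Hid) => [h1 h2]; apply/PredP; rewrite size_mkseq; split=> // k kl.
rewrite nth_mkseq //; case: ifP => [/andP [ik kd]|_]; last exact: h1.
by have := h2 (k - i) ltac:(lia); rewrite subnK.
Qed.

Lemma slen_size t : slen t <= bsize t.
Proof. elim: t => //= l IH r _; lia. Qed.

Lemma count_sumb (p : pred btree) s : count p s = \sum_(x <- s) p x.
Proof. exact: count_sum. Qed.

Lemma cnt_av d i Pe n : i < d ->
  cnt (fun t => ~~ containsb t (attach_pattern d i Pe)) n =
  \sum_(L < n.+1) cnt (Pred (mk (fun t => ~~ containsb t (attach_pattern d i Pe))
                                 (fun t => ~~ containsb t Pe) d i L)) n.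
Proof.
move=> Hid; rewrite /cnt count_sum.
rewrite [RHS](eq_bigr (fun L : 'I_n.+1 => \sum_(t <- trees n) Pred (mk (fun t => ~~ containsb t (attach_pattern d i Pe))
                                 (fun t => ~~ containsb t Pe) d i L) t)); last by move=> L _; apply: count_sum.
rewrite exchange_big /= big_seq [RHS]big_seq; apply: eq_bigr => t.
rewrite mem_trees => /eqP tn.
have E (L : nat) : (Pred (mk (fun t => ~~ containsb t (attach_pattern d i Pe))
                                 (fun t => ~~ containsb t Pe) d i L) t : nat)
   = if slen t == L then (~~ containsb t (attach_pattern d i Pe) : nat) else 0.
  case: eqP => [<-|ne]; first by rewrite Pred_mk.
  by case: (boolP (Pred _ t)) => // /PredP []; rewrite size_mkseq => e; case: ne.
under eq_bigr => L _ do rewrite E.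
by rewrite (@sum_pick n (slen t) (fun _ => (~~ containsb t (attach_pattern d i Pe) : nat))) ltnS -tn slen_size.
Qed.

Unset Implicit Arguments.

Theorem lemma18 (d i j : nat) (Pe : pattern) :
  i < d -> j < d -> i != j ->
  wilf_equiv (attach_pattern d i Pe) (attach_pattern d j Pe).
Proof.
move=> Hi Hj _ n; rewrite /num_avoiders.
elim/ltn_ind: n => n IH.
have:= cnt_av Pe n Hi; rewrite /cnt => ->.
have:= cnt_av Pe n Hj; rewrite /cnt => ->.
apply: eq_bigr => L _.
rewrite -/(cnt _ n) -/(cnt _ n).
rewrite -(cnt_mk _ _ L n Hi Hj).
apply: cnt_replace; first by rewrite !size_mkseq.
move=> k m mn; case: (ltnP k L) => kL.
  by rewrite !nth_mkseq //; case: ifP => // _; apply: IH.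
by rewrite !nth_default ?size_mkseq.
Qed.
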